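(* Let $r\ge2$ and let $\mathcal{P}$ be a set of $r$-patterns. Suppose there are constants $C>0$ and $0\le x<r$ such that $a_{\mathcal P}(k)\le C^{k}k^{kx}$ for all $k\ge2$. Then there is a constant $C''>0$ such that a.a.s. $z_{\mathcal{P}}(\mathbb{RM}^{(r)}_{n})\le C'' n^{1/(r-x)}$.
   Context: An ordered $r$-matching of size $k$ is a set of $k$ pairwise disjoint $r$-element subsets (edges) of a linearly ordered vertex set of size $rk$; $\mathcal{M}^{(r)}_k$ is the set of all ordered $r$-matchings on $[rk]$ and $\mathbb{RM}^{(r)}_n$ is a uniformly random element of $\mathcal{M}^{(r)}_n$. An $r$-pattern is an ordered $r$-matching of size 2 (written as a word over $\{A,B\}$, each letter $r$ times). Two edges form pattern $P$ if they induce a matching order-isomorphic to $P$. For a set $\mathcal P$ of $r$-patterns, a $\mathcal P$-clique is an ordered matching all of whose pairs of edges form patterns in $\mathcal P$; $z_{\mathcal P}(M)$ is the largest size of a $\mathcal P$-clique contained in $M$; $a_{\mathcal P}(k)$ is the number of $\mathcal P$-cliques in $\mathcal{M}^{(r)}_k$. ''A.a.s.'' means with probability tending to 1 as $n\to\infty$. *)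

(* Defs.v *)
From Stdlib Require Import Reals.
From mathcomp Require Import all_boot.
Set Implicit Arguments. Unset Strict Implicit. Unset Printing Implicit Defensive.

(* An ordered r-matching of size k: a partition of [rk] = 'I_(r*k) (ordered by
   the natural order of ordinals) into blocks (edges) of size exactly r. *)
Definition is_matching (r k : nat) (M : {set {set 'I_(r * k)}}) : bool :=
  partition M [set: 'I_(r * k)] && [forall e in M, #|e| == r].

(* Edges e, f (on the ordered vertex set 'I_N) form the r-pattern P (a matching
   on 'I_(r*2)) iff, via the unique order isomorphism g : 'I_(r*2) -> e :|: f,
   the induced matching {g^-1(e), g^-1(f)} equals P. *)
Definition forms_pattern (r N : nat) (P : {set {set 'I_(r * 2)}})
    (e f : {set 'I_N}) : bool :=
  [exists g : {ffun 'I_(r * 2) -> 'I_N},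
    [&& [forall i : 'I_(r * 2), forall j : 'I_(r * 2), (i < j)%N ==> (g i < g j)%N],
        e :|: f == [set g i | i : 'I_(r * 2)]
      & P == [set g @^-1: e; g @^-1: f]]].

Definition is_clique (r N : nat) (Pats : {set {set {set 'I_(r * 2)}}})
    (S : {set {set 'I_N}}) : bool :=
  [forall e in S, forall f in S,
     (e != f) ==> [exists P in Pats, forms_pattern P e f]].

Definition zP (r N : nat) (Pats : {set {set {set 'I_(r * 2)}}})
    (M : {set {set 'I_N}}) : nat :=
  \max_(S : {set {set 'I_N}} | (S \subset M) && is_clique Pats S) #|S|.

Definition aP (r : nat) (Pats : {set {set {set 'I_(r * 2)}}}) (k : nat) : nat :=
  #|[set M : {set {set 'I_(r * k)}} | is_matching M && is_clique Pats M]|.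

Definition prob_RM (r n : nat) (Q : {set {set 'I_(r * n)}} -> bool) : R :=
  Rdiv (INR #|[set M : {set {set 'I_(r * n)}} | is_matching M && Q M]|)
   (INR #|[set M : {set {set 'I_(r * n)}} | is_matching M]|).

Definition Rleb (a b : R) : bool := if Rle_dec a b then true else false.

(* Main.v *)
Require Import Defs.
From Stdlib Require Import Arith Ring Reals Lra ZArith Lia.
From mathcomp Require Import all_boot zify.
Set Implicit Arguments. Unset Strict Implicit. Unset Printing Implicit Defensive.

Lemma inj_le (T U : finType) (A : {set T}) (B : {set U}) (f : T -> U) :
  {in A &, injective f} -> (forall x, x \in A -> f x \in B) -> #|A| <= #|B|.
Proof.
move=> inj fAB; rewrite -(card_in_imset inj); apply: subset_leq_card.
by apply/subsetP => y /imsetP [z zA ->]; apply: fAB.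
Qed.

Section Parts.
Variable T : finType.
Variable r : nat.

Definition rparts (A : {set T}) :=
  [set M : {set {set T}} | partition M A && [forall e in M, #|e| == r]].

Lemma cover_setD (M S : {set {set T}}) : trivIset M -> S \subset M ->
  cover (M :\: S) = cover M :\: cover S.
Proof.
move=> tM sSM; apply/setP => y; apply/bigcupP/setDP.
- move=> [e /setDP [eM eS] ye]; split; first by apply/bigcupP; exists e.
  apply/bigcupP => [[f fS yf]].
  have fM : f \in M by apply: (subsetP sSM).
  case: (eqVneq e f) => [ef|nef]; first by rewrite ef fS in eS.
  by move: (trivIsetP tM e f eM fM nef) => /disjointFr/(_ ye); rewrite yf.
- move=> [/bigcupP [e eM ye] nS]; exists e => //; apply/setDP; split => //.
  by apply/negP => eS; move/negP: nS; apply; apply/bigcupP; exists e.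
Qed.

Lemma partition_setD (M S : {set {set T}}) A : partition M A -> S \subset M ->
  partition (M :\: S) (A :\: cover S).
Proof.
move=> pM sSM; have tM := partition_trivIset pM.
rewrite /partition cover_setD // (cover_partition pM) eqxx /=.
rewrite (trivIsetS (subsetDl M S) tM) /=.
by rewrite in_setD (partition0 pM) andbF.
Qed.

Lemma rparts_setD (M S : {set {set T}}) A : M \in rparts A -> S \subset M ->
  M :\: S \in rparts (A :\: cover S).
Proof.
rewrite !inE => /andP [pM /forall_inP sz] sSM.
rewrite partition_setD //=; apply/forall_inP => e /setDP [eM _]; exact: sz.
Qed.

End Parts.
Lemma arith_helper (X a b G e Z s m : nat) : X * (a * G) = e * Z ->
  X * (m.+1 * a * (s.+1 * b * G)) = (s.+1 * m + s).+1 * (e * (b * Z)).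
Proof. move=> h.
have -> : (s.+1 * m + s).+1 * (e * (b * Z)) = (s.+1 * m + s).+1 * b * (e * Z).
  rewrite -!multE -!plusE; ring.
rewrite -h. rewrite -!multE -!plusE. ring.
Qed.

Section Rec.
Variable T : finType.
Variable r : nat.

Lemma fiber_card (A e : {set T}) a : a \in e -> e \subset A -> #|e| = r ->
  #|[set M | (M \in rparts r A) && (pblock M a == e)]| = #|rparts r (A :\: e)|.
Proof.
move=> ae eA ce; apply/eqP; rewrite eqn_leq; apply/andP; split.
- apply: (@inj_le _ _ _ _ (fun M => M :\ e)).
  + move=> M1 M2; rewrite !inE => /andP [p1 /eqP b1] /andP [p2 /eqP b2] h.
    have aA : a \in A by apply: (subsetP eA).
    have e1 : e \in M1.
      move: p1 => /andP [pM _]; rewrite -b1; apply: pblock_mem.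
      by rewrite (cover_partition pM).
    have e2 : e \in M2.
      move: p2 => /andP [pM _]; rewrite -b2; apply: pblock_mem.
      by rewrite (cover_partition pM).
    by rewrite -(setD1K e1) -(setD1K e2) h.
  + move=> M; rewrite !inE => /andP [p1 /eqP b1].
    have e1 : e \in M.
      move: (p1) => /andP [pM _]; rewrite -b1; apply: pblock_mem.
      by rewrite (cover_partition pM); apply: (subsetP eA).
    have p1' : M \in rparts r A by rewrite inE.
    have := rparts_setD p1' (_ : [set e] \subset M); rewrite cover1 ?inE; apply.
    by rewrite sub1set.
- apply: (@inj_le _ _ _ _ (fun M => e |: M)).
  + move=> M1 M2; rewrite !inE => /andP [p1 _] /andP [p2 _] h.
    have ne : forall M, partition M (A :\: e) -> e \notin M.
      move=> M pM; apply/negP => eM; have := partitionS pM eM.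
      by move/subsetP/(_ a ae); rewrite inE ae.
    by rewrite -(setU1K (ne _ p1)) -(setU1K (ne _ p2)) h.
  + move=> M; rewrite !inE => /andP [pM /forall_inP sz].
    have e0 : e != set0 by apply/set0Pn; exists a.
    have dj : [disjoint e & A :\: e].
      by rewrite disjoint_subset; apply/subsetP => y ye; rewrite !inE ye.
    have pU := partitionU1 pM e0 dj.
    have eq : e :|: A :\: e = A.
      apply/setP => y; rewrite !inE; case ye: (y \in e) => //=.
      by rewrite (subsetP eA).
    rewrite eq in pU.
    rewrite pU /=; apply/andP; split.
      apply/forall_inP => f /setU1P [->|fM]; first by rewrite ce.
      exact: sz.
    apply/eqP; apply: def_pblock => //; first exact: partition_trivIset pU.
    exact: setU11.
Qed.

Lemma rparts_card m (A : {set T}) : 0 < r -> #|A| = r * m ->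
  #|rparts r A| * (m`! * r`! ^ m) = (r * m)`!.
Proof.
move=> r0; elim: m A => [|m IH] A cA.
  rewrite muln0 in cA; rewrite (cards0_eq cA) muln0.
  have -> : rparts r set0 = [set (set0 : {set {set T}})].
    apply/setP => M; rewrite !inE partition_set0; apply: andb_idr.
    by move/eqP => ->; apply/forall_inP => e; rewrite inE.
  by rewrite cards1.
have : 0 < #|A| by rewrite cA muln_gt0 r0.
case/card_gt0P => a aA.
set E := [set e : {set T} | [&& a \in e, e \subset A & #|e| == r]].
have step1 : #|rparts r A| = \sum_(e in E) #|rparts r (A :\: e)|.
  rewrite -sum1_card (partition_big (fun M => pblock M a) (fun e => e \in E)).
    apply: eq_bigr => e; rewrite inE => /and3P [ae eA /eqP ce].
    rewrite -(fiber_card ae eA ce) -sum1_card.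
    by apply: eq_bigl => M; rewrite inE.
  move=> M; rewrite inE => /andP [pM /forall_inP sz].
  have aM : a \in cover M by rewrite (cover_partition pM).
  have bM := pblock_mem aM.
  rewrite inE mem_pblock aM (partitionS pM bM) /=; exact: sz.
have step2 : #|rparts r A| * (m`! * r`! ^ m) = #|E| * (r * m)`!.
  rewrite step1 big_distrl /= -sum_nat_const; apply: eq_bigr => e.
  rewrite inE => /and3P [ae eA /eqP ce]; apply: IH.
  rewrite cardsD (setIidPr eA) cA ce.
  by rewrite mulnS addKn.
have step3 : #|E| = 'C(r * m + r - 1, r - 1).
  have cA1 : #|A :\ a| = r * m + r - 1.
    move: cA; rewrite (cardsD1 a A) aA mulnS; lia.
  rewrite -cA1 -cards_draws; apply/eqP; rewrite eqn_leq; apply/andP; split.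
  - apply: (@inj_le _ _ _ _ (fun e => e :\ a)).
      move=> e1 e2; rewrite !inE => /and3P [a1 _ _] /and3P [a2 _ _] h.
      by rewrite -(setD1K a1) -(setD1K a2) h.
    move=> e; rewrite !inE => /and3P [ae eA /eqP ce].
    rewrite setSD //=; move: (cardsD1 a e); rewrite ae ce => ->.
    by rewrite add1n subn1.
  - apply: (@inj_le _ _ _ _ (fun B => a |: B)).
      move=> B1 B2; rewrite !inE => /andP [s1 _] /andP [s2 _] h.
      have n1 : a \notin B1 by apply/negP => /(subsetP s1); rewrite !inE eqxx.
      have n2 : a \notin B2 by apply/negP => /(subsetP s2); rewrite !inE eqxx.
      by rewrite -(setU1K n1) -(setU1K n2) h.
    move=> B; rewrite !inE => /andP [sB /eqP cB].
    have n1 : a \notin B by apply/negP => /(subsetP sB); rewrite !inE eqxx.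
    rewrite eqxx /= cardsU1 n1 cB add1n subn1 prednK // eqxx andbT.
    apply/subsetP => y /setU1P [->|yB] //.
    by move/(subsetP sB): yB; rewrite inE => /andP [].
case: r r0 step2 step3 => // s _ step2 step3.
have e1 : s.+1 * m + s.+1 - 1 = s.+1 * m + s by rewrite addnS subn1.
rewrite e1 subn1 /= in step3.
have -> : s.+1 * m.+1 = (s.+1 * m + s).+1 by rewrite mulnS addnC addnS.
rewrite [((s.+1 * m + s).+1)`!]factS -(bin_fact (leq_addl (s.+1 * m) s)) addnK.
rewrite -step3 [(m.+1)`!]factS [(s.+1)`!]factS expnS.
exact: arith_helper step2.
Qed.


End Rec.

Section Transport.
Variable N : nat.
Variable d : 'I_N.

Definition hV m (V : {set 'I_N}) (i : 'I_m) : 'I_N := nth d (enum V) i.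

Lemma enum_sorted (V : {set 'I_N}) : sorted (relpre val ltn) (enum V).
Proof.
have tr : transitive (relpre (@nat_of_ord N) ltn).
  by move=> b a c /= h1 h2; exact: ltn_trans h1 h2.
rewrite /enum_mem -enumT; apply: sorted_filter => //.
by rewrite -sorted_map val_enum_ord iota_ltn_sorted.
Qed.

Variable m : nat.
Variable V : {set 'I_N}.
Hypothesis cV : #|V| = m.

Lemma hV_incr (i j : 'I_m) : i < j -> hV V i < hV V j.
Proof.
move=> ij; have tr : transitive (relpre (@nat_of_ord N) ltn).
  by move=> b a c /= h1 h2; exact: ltn_trans h1 h2.
have := @sorted_ltn_nth _ _ tr d (enum V) (enum_sorted V) i j.
rewrite !inE -cardE cV !ltn_ord; by move/(_ isT isT ij).
Qed.

Lemma hV_inj : injective (@hV m V).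
Proof.
move=> i j h; apply/eqP; case: (ltngtP i j) => [ij|ji|/val_inj -> //].
  by have := hV_incr ij; rewrite h ltnn.
by have := hV_incr ji; rewrite h ltnn.
Qed.

Lemma hV_refl (i j : 'I_m) : hV V i < hV V j -> i < j.
Proof.
move=> h; case: (ltngtP i j) => // [ji|/val_inj e].
  by have := hV_incr ji; rewrite ltnNge ltnW.
by rewrite e ltnn in h.
Qed.

Lemma hV_mem (i : 'I_m) : hV V i \in V.
Proof. by rewrite -mem_enum /hV mem_nth // -cardE cV. Qed.

Lemma hV_onto y : y \in V -> exists i : 'I_m, hV V i = y.
Proof.
move=> yV; have ys : y \in enum V by rewrite mem_enum.
have lt : index y (enum V) < m by rewrite -cV cardE index_mem.
by exists (Ordinal lt); rewrite /hV /= nth_index.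
Qed.

Lemma hV_imset_preim (e : {set 'I_N}) : e \subset V ->
  [set @hV m V x | x in @hV m V @^-1: e] = e.
Proof.
move=> eV; apply/setP => y; apply/imsetP/idP.
  by move=> [z]; rewrite inE => hz ->.
move=> ye; have [i hi] := hV_onto (subsetP eV y ye).
by exists i => //; rewrite inE hi.
Qed.

Lemma hV_imsetT : [set @hV m V x | x in [set: 'I_m]] = V.
Proof.
apply/setP => y; apply/imsetP/idP.
  by move=> [z _ ->]; exact: hV_mem.
by move=> /hV_onto [i hi]; exists i.
Qed.

Lemma forms_transport r (P : {set {set 'I_(r * 2)}}) (e f : {set 'I_N}) :
  e \subset V -> f \subset V -> forms_pattern P e f ->
  forms_pattern P (@hV m V @^-1: e) (@hV m V @^-1: f).
Proof.
move=> eV fV /existsP [g /and3P [/forallP inc /eqP Eim /eqP EP]].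
have ex : forall i : 'I_(r * 2), exists j : 'I_m, hV V j = g i.
  move=> i; apply: hV_onto; have : g i \in e :|: f by rewrite Eim imset_f.
  by rewrite inE => /orP [/(subsetP eV) | /(subsetP fV)].
have [g' Hg'] := fin_all_exists ex.
apply/existsP; exists [ffun i => g' i]; apply/and3P; split.
- apply/forallP => i; apply/forallP => j; apply/implyP => ij.
  rewrite !ffunE; apply: hV_refl; rewrite !Hg'.
  by have := inc i; move/forallP/(_ j)/implyP/(_ ij).
- apply/eqP/setP => y; rewrite !inE; apply/idP/imsetP.
    move=> hy; have : hV V y \in e :|: f by rewrite inE.
    rewrite Eim => /imsetP [i _ hi]; exists i => //; rewrite ffunE.
    by apply: hV_inj; rewrite Hg'.
  move=> [i _ ->]; rewrite ffunE Hg'.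
  have : g i \in e :|: f by rewrite Eim imset_f.
  by rewrite inE.
- apply/eqP; rewrite EP; congr [set _; _]; apply/setP => i;
  by rewrite !inE ffunE Hg'.
Qed.

End Transport.

Lemma cover_sum (T U : finType) (A : {set T}) (I : {set U}) (F : U -> {set T}) :
  (forall a, a \in A -> exists2 i, i \in I & a \in F i) ->
  #|A| <= \sum_(i in I) #|F i|.
Proof.
move=> H; rewrite -sum1_card.
apply: (@leq_trans (\sum_(a in A) \sum_(i in I) (a \in F i : nat))).
  apply: leq_sum => a aA; have [i iI ai] := H a aA.
  by rewrite (bigD1 i) //= ai; exact: leq_addr.
rewrite exchange_big /=; apply: leq_sum => i _.
rewrite -sum1_card big_mkcond [X in _ <= X]big_mkcond /=.
by apply: leq_sum => a _; case: (a \in A); case: (a \in F i).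
Qed.

Section Count.
Variable r : nat.
Variable Pats : {set {set {set 'I_(r * 2)}}}.

Definition Cl (N k : nat) : {set {set {set 'I_N}}} :=
  [set S : {set {set 'I_N}} | [&& #|S| == k, [forall e in S, #|e| == r], trivIset S & is_clique Pats S]].

Lemma clique_sub N (S S0 : {set {set 'I_N}}) : S \subset S0 ->
  is_clique Pats S0 -> is_clique Pats S.
Proof.
move=> sub cl; apply/forall_inP => e eS; apply/forall_inP => f fS.
move/forall_inP: cl => /(_ e (subsetP sub e eS)) /forall_inP /(_ f (subsetP sub f fS)).
done.
Qed.

Lemma card_Cl N (d : 'I_N) (k : nat) : 0 < r -> #|Cl N k| <= 'C(N, r * k) * aP Pats k.
Proof.
move=> r0.
pose F := fun S : {set {set 'I_N}} =>
  (cover S, [set @hV N d (r * k) (cover S) @^-1: e | e : {set 'I_N} in S]).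
rewrite -[X in 'C(X, _)](card_ord N) -card_draws /aP -cardsX.
have key : forall S : {set {set 'I_N}}, S \in Cl N k ->
   [/\ #|cover S| = r * k,
       [set [set @hV N d (r * k) (cover S) x | x in B] | B : {set 'I_(r * k)} in (F S).2] = S &
       (F S).2 \in [set M : {set {set 'I_(r * k)}} | is_matching M && is_clique Pats M]].
  move=> S; rewrite inE => /and4P [/eqP cS /forall_inP sz tS cl].
  have n0 : set0 \notin S.
    by apply/negP => /sz; rewrite cards0 eq_sym => /eqP r00; rewrite r00 in r0.
  have pS : partition S (cover S) by rewrite /partition eqxx tS n0.
  have cV : #|cover S| = r * k.
    by rewrite (card_uniform_partition (fun e eS => eqP (sz e eS)) pS) cS mulnC.
  have subV : forall e, e \in S -> e \subset cover S.
    by move=> e eS; apply: (bigcup_sup e eS).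
  have T1 : [set [set @hV N d (r * k) (cover S) x | x in B] | B : {set 'I_(r * k)} in (F S).2] = S.
    rewrite /F /= -imset_comp; rewrite -[RHS]imset_id.
    by apply: eq_in_imset => e eS /=; rewrite hV_imset_preim // subV.
  split => //.
  have hinj := @hV_inj N d _ _ cV.
  rewrite inE; apply/andP; split.
    rewrite /is_matching -(imset_partition _ _ hinj) T1 hV_imsetT // pS /=.
    apply/forall_inP => e' /imsetP [e eS ->].
    rewrite -(card_imset _ hinj) hV_imset_preim ?subV //; exact: sz.
  apply/forall_inP => e' /imsetP [e eS ->]; apply/forall_inP => f' /imsetP [f fS ->].
  apply/implyP => nef.
  have nef0 : e != f by apply: contraNneq nef => ->.
  move/forall_inP: cl => /(_ e eS) /forall_inP /(_ f fS) /implyP /(_ nef0).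
  move=> /exists_inP [P PP fp]; apply/exists_inP; exists P => //.
  by apply: forms_transport => //; apply: subV.
apply: (@inj_le _ _ _ _ F).
  move=> S1 S2 h1 h2 h; have [_ T1 _] := key _ h1; have [_ T2 _] := key _ h2.
  move: h; rewrite /F => [[c12 s12]].
  by rewrite -T1 -T2 /F /= s12 c12.
move=> S h; have [cV _ M] := key _ h.
by rewrite inE /= inE cV eqxx.
Qed.

End Count.

Lemma arith2 cnt U W Cl z a C Rk Rn Nf tot Nk Nkf Fk Fnk Fn :
 cnt <= U -> U*W = Cl*z -> Cl <= C*a -> tot*(Nf*Fn) = Rn -> C*(Rk*z) = Rn ->
 Nf <= Nk*Nkf -> Fk*Fnk = Fn -> W = Nkf*Fnk -> 0 < W*Nf ->
 cnt*Rk <= a*(Fk*Nk)*tot.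
Proof.
move=> hU hUW hCl ht hb hf hp hW pos.
rewrite -(leq_pmul2r pos).
apply: (@leq_trans (a * Rn * Nf)).
  apply: (@leq_trans (U * W * (Rk * Nf))).
    have -> : cnt * Rk * (W * Nf) = cnt * W * (Rk * Nf) by rewrite -!multE; ring.
    by apply: leq_mul => //; apply: leq_mul.
  rewrite hUW -hb.
  have -> : C * (Rk * z) = C * Rk * z by rewrite -!multE; ring.
  have -> : Cl * z * (Rk * Nf) = Cl * (z * Rk * Nf) by rewrite -!multE; ring.
  have -> : a * (C * Rk * z) * Nf = (C * a) * (z * Rk * Nf) by rewrite -!multE; ring.
  by apply: leq_mul.
have -> : a * (Fk * Nk) * tot * (W * Nf) = a * Rn * (Nk * Nkf).
  by rewrite -ht -hp hW -!multE; ring.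
by apply: leq_mul.
Qed.

Lemma ffact_le_exp n k : n ^_ k <= n ^ k.
Proof. elim: k => [|k IH]; first by rewrite ffactn0 expn0.
rewrite ffactnSr expnS mulnC; apply: leq_mul => //; exact: leq_subr. Qed.

Section Key.
Variable r : nat.
Variable Pats : {set {set {set 'I_(r * 2)}}}.
Hypothesis r0 : 0 < r.

Lemma is_matching_rparts n (M : {set {set 'I_(r * n)}}) :
  is_matching M = (M \in rparts r [set: 'I_(r * n)]).
Proof. by rewrite inE. Qed.

Lemma union_bound n k : 0 < k ->
  #|[set M : {set {set 'I_(r * n)}} | is_matching M && (k <= zP Pats M)]|
  <= \sum_(S in @Cl r Pats (r * n) k) #|rparts r (~: cover S)|.
Proof.
move=> k0.
apply: (@leq_trans (\sum_(S in @Cl r Pats (r * n) k)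
   #|[set M : {set {set 'I_(r * n)}} | is_matching M && (S \subset M)]|)).
  apply: cover_sum => M; rewrite inE => /andP [mM kz].
  have [S0 /and3P [sub0 cl0 kS0]] : exists S : {set {set 'I_(r * n)}},
      [&& S \subset M, is_clique Pats S & k <= #|S|].
    case: (boolP [exists S : {set {set 'I_(r * n)}},
      [&& S \subset M, is_clique Pats S & k <= #|S|]]) => [/existsP //| none].
    have : zP Pats M <= k.-1.
      apply/bigmax_leqP => S /andP [sS cS]; rewrite -ltnS prednK //.
      rewrite ltnNge; apply/negP => kS; move/negP: none; apply.
      by apply/existsP; exists S; rewrite sS cS kS.
    by move=> h; have := leq_trans kz h; rewrite -ltnS prednK // ltnn.
  have : 0 < #|[set B : {set {set 'I_(r * n)}} | B \subset S0 & #|B| == k]| by rewrite cards_draws bin_gt0.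
  case/card_gt0P => B; rewrite inE => /andP [sB /eqP cB].
  move: mM; rewrite is_matching_rparts inE => /andP [pM /forall_inP szM].
  have sBM := subset_trans sB sub0.
  exists B.
    rewrite inE cB eqxx /=; apply/and3P; split.
    - by apply/forall_inP => e eB; apply: szM; apply: (subsetP sBM).
    - exact: trivIsetS sBM (partition_trivIset pM).
    - exact: clique_sub sB cl0.
  by rewrite inE sBM andbT is_matching_rparts inE pM; apply/forall_inP.
apply: leq_sum => S _.
apply: (@inj_le _ _ _ _ (fun M => M :\: S)).
  move=> M1 M2; rewrite !inE => /andP [_ s1] /andP [_ s2] h.
  apply/setP => x; case xS: (x \in S).
    by rewrite (subsetP s1 x xS) (subsetP s2 x xS).
  by move/setP: h => /(_ x); rewrite !inE xS.
move=> M; rewrite inE is_matching_rparts => /andP [mM sM].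
by rewrite -setTD; apply: rparts_setD.
Qed.

Lemma key_bound n k (d : 'I_(r * n)) : 0 < k ->
  #|[set M : {set {set 'I_(r * n)}} | is_matching M && (k <= zP Pats M)]| * (r * k)`!
  <= aP Pats k * (r`! ^ k * n ^ k) * #|[set M : {set {set 'I_(r * n)}} | is_matching M]|.
Proof.
move=> k0.
have hU := union_bound n k0.
have hCl := @card_Cl r Pats (r * n) d k r0.
case: (leqP k n) => kn; last first.
  have : 'C(r * n, r * k) = 0 by rewrite bin_small // ltn_pmul2l.
  move=> c0; rewrite c0 mul0n leqn0 in hCl.
  move: hU; rewrite (eq_bigl (fun=> false)); first by rewrite big_pred0_eq leqn0 => /eqP ->.
  by move=> S; apply/negP => SC; move/eqP: hCl => /card0_eq /(_ S); rewrite SC.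
have htot : #|[set M : {set {set 'I_(r * n)}} | is_matching M]| * (n`! * r`! ^ n) = (r * n)`!.
  have cT : #|[set: 'I_(r * n)]| = r * n by rewrite cardsT card_ord.
  have hr := rparts_card r0 cT.
  rewrite -hr; congr (_ * _); apply: eq_card => M; by rewrite !inE.
have hUW : (\sum_(S in @Cl r Pats (r * n) k) #|rparts r (~: cover S)|) *
    ((n - k)`! * r`! ^ (n - k)) = #|@Cl r Pats (r * n) k| * (r * (n - k))`!.
  rewrite big_distrl /= -sum_nat_const; apply: eq_bigr => S.
  rewrite inE => /and4P [/eqP cS /forall_inP sz tS _].
  apply: rparts_card => //.
  have n0 : set0 \notin S.
    by apply/negP => /sz; rewrite cards0 eq_sym => /eqP r00; move: r0; rewrite r00.
  have pS : partition S (cover S) by rewrite /partition eqxx tS n0.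
  rewrite cardsCs setCK card_ord (card_uniform_partition (fun e eS => eqP (sz e eS)) pS).
  by rewrite cS mulnBr [k * r]mulnC.
have hbin : 'C(r * n, r * k) * ((r * k)`! * (r * (n - k))`!) = (r * n)`!.
  by rewrite mulnBr bin_fact // leq_pmul2l.
have hff : n`! <= n ^ k * (n - k)`!.
  by rewrite -(ffact_fact kn) leq_mul2r ffact_le_exp orbT.
have hpow : r`! ^ k * r`! ^ (n - k) = r`! ^ n by rewrite -expnD subnKC.
apply: (arith2 hU hUW hCl htot hbin hff hpow erefl).
by rewrite !muln_gt0 !fact_gt0 expn_gt0 fact_gt0.
Qed.

End Key.

Local Open Scope R_scope.

Lemma INRM (a b : nat) : INR (a * b) = INR a * INR b.
Proof. by rewrite -mult_INR. Qed.

Lemma INRX (a b : nat) : INR (a ^ b) = INR a ^ b.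
Proof. elim: b => [|b IH]; first by [].
by rewrite expnS INRM IH. Qed.

Lemma exp_pow_INR (a : R) (m : nat) : exp a ^ m = exp (INR m * a).
Proof.
elim: m => [|m IH]; first by rewrite /= Rmult_0_l exp_0.
have -> : exp a ^ m.+1 = exp a * exp a ^ m by [].
by rewrite IH S_INR -exp_plus; f_equal; ring.
Qed.

Lemma succ_pow_le (m : nat) : INR m.+1 ^ m <= 3 * INR m ^ m.
Proof.
case: m => [|m]; first by rewrite /=; lra.
set M := INR m.+1.
have M0 : 0 < M by apply: lt_0_INR; apply/ltP.
have -> : INR m.+2 = M * (1 + / M) by rewrite (S_INR m.+1) -/M; field; lra.
rewrite Rpow_mult_distr Rmult_comm; apply: Rmult_le_compat_r.
  by apply: pow_le; lra.
apply: (Rle_trans _ (exp (/ M) ^ m.+1)).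
  apply: pow_incr; split.
    by have := Rinv_0_lt_compat _ M0; lra.
  by apply: Rlt_le; apply: exp_ineq1; apply: Rinv_neq_0_compat; lra.
rewrite exp_pow_INR -/M Rinv_r; last lra.
exact: exp_le_3.
Qed.

Lemma fact_bound (m : nat) : INR m ^ m <= 3 ^ m * INR (m`!).
Proof.
elim: m => [|m IH]; first by simpl; lra.
rewrite factS INRM -!tech_pow_Rmult.
have h := succ_pow_le m.
have p : 0 <= INR m.+1 by apply: pos_INR.
have p3 : 0 <= 3 ^ m by apply: pow_le; lra.
apply: (Rle_trans _ (INR m.+1 * (3 * INR m ^ m))).
  by apply: Rmult_le_compat_l.
apply: (Rle_trans _ (INR m.+1 * (3 * (3 ^ m * INR m`!)))).
  by apply: Rmult_le_compat_l => //; apply: Rmult_le_compat_l => //; lra.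
by right; ring.
Qed.

Lemma tot_eq (r : nat) (r0 : (0 < r)%N) n :
  (#|[set M : {set {set 'I_(r * n)}} | is_matching M]| * (n`! * r`! ^ n))%N = (r * n)`!.
Proof.
have cT : #|[set: 'I_(r * n)]| = (r * n)%N by rewrite cardsT card_ord.
have hr := rparts_card r0 cT.
rewrite -hr; congr (_ * _)%N; apply: eq_card => M; by rewrite !inE.
Qed.

Lemma tot_pos (r : nat) (r0 : (0 < r)%N) n :
  (0 < #|[set M : {set {set 'I_(r * n)}} | is_matching M]|)%N.
Proof.
have := tot_eq r0 n; case: #|_| => //= h.
by have := fact_gt0 (r * n); rewrite -h.
Qed.

Lemma Rpower_pos a b : 0 < Rpower a b.
Proof. rewrite /Rpower; exact: exp_pos. Qed.

Lemma key_real (r : nat) (Pats : {set {set {set 'I_(r * 2)}}}) n k (C x : R) :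
  (0 < r)%N -> (0 < n)%N -> (0 < k)%N -> 0 < C ->
  INR (aP Pats k) <= C ^ k * Rpower (INR k) (INR k * x) ->
  INR #|[set M : {set {set 'I_(r * n)}} | is_matching M && (k <= zP Pats M)%N]|
   / INR #|[set M : {set {set 'I_(r * n)}} | is_matching M]|
  <= (C * Rpower (INR k) x * INR r`! * INR n * 3 ^ r / (INR r * INR k) ^ r) ^ k.
Proof.
move=> r0 n0 k0 C0 ha.
have d : 'I_(r * n) by exists 0%N; rewrite muln_gt0 r0 n0.
have kb := key_bound Pats r0 d k0.
set cnt := #|[set M : {set {set 'I_(r * n)}} | is_matching M && (k <= zP Pats M)%N]| in kb *.
set tot := #|[set M : {set {set 'I_(r * n)}} | is_matching M]| in kb *.
have tot0 : 0 < INR tot by apply: lt_0_INR; apply/ltP; apply: tot_pos.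
have kbR := le_INR _ _ (leP kb).
rewrite !INRM !INRX in kbR.
set F := INR (r * k)`! in kbR.
have F0 : 0 < F by apply: lt_0_INR; apply/ltP; apply: fact_gt0.
have fb := fact_bound (r * k).
rewrite -/F INRM in fb.
set P := INR r * INR k in fb *.
have P0 : 0 < P.
  by apply: Rmult_lt_0_compat; apply: lt_0_INR; apply/ltP.
set Rx := Rpower (INR k) x.
have Rx0 : 0 < Rx by apply: Rpower_pos.
have hRx : Rpower (INR k) (INR k * x) = Rx ^ k.
  by rewrite Rmult_comm -Rpower_mult Rpower_pow //; apply: Rpower_pos.
rewrite hRx in ha.
set Rf := INR r`!.
set nn := INR n.
have Rf0 : 0 <= Rf by apply: pos_INR.
have nn0 : 0 <= nn by apply: pos_INR.
set A := C * Rx * Rf * nn * 3 ^ r.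
have A0 : 0 <= A.
  rewrite /A; apply: Rmult_le_pos; last by apply: pow_le; lra.
  apply: Rmult_le_pos => //; apply: Rmult_le_pos => //; apply: Rmult_le_pos; lra.
set q := A / P ^ r.
have Pr0 : 0 < P ^ r by apply: pow_lt.
have qk : q ^ k * P ^ (r * k) = A ^ k.
  rewrite -[(r * k)%N]/((r * k)%coq_nat) pow_mult -Rpow_mult_distr /q.
  by f_equal; field; lra.
have Ak : A ^ k = C ^ k * Rx ^ k * Rf ^ k * nn ^ k * 3 ^ (r * k).
  rewrite /A !Rpow_mult_distr -[(r * k)%N]/((r * k)%coq_nat) pow_mult //.
have q0 : 0 <= q ^ k.
  apply: pow_le; rewrite /q; apply: Rmult_le_pos => //.
  by apply: Rlt_le; apply: Rinv_0_lt_compat.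
have p3 : 0 < 3 ^ (r * k) by apply: pow_lt; lra.
have h1 : INR (aP Pats k) * Rf ^ k * nn ^ k <= q ^ k * F.
  apply: (Rmult_le_reg_r (3 ^ (r * k))) => //.
  apply: (Rle_trans _ (A ^ k)).
    rewrite Ak; apply: Rmult_le_compat_r; first lra.
    apply: Rmult_le_compat_r; first by apply: pow_le.
    by apply: Rmult_le_compat_r; first by apply: pow_le.
  rewrite -qk Rmult_assoc; apply: Rmult_le_compat_l => //.
  by rewrite Rmult_comm.
have h2 : INR cnt * F <= q ^ k * INR tot * F.
  apply: (Rle_trans _ _ _ kbR).
  have -> : INR (aP Pats k) * (Rf ^ k * nn ^ k) * INR tot =
     (INR (aP Pats k) * Rf ^ k * nn ^ k) * INR tot by ring.
  have -> : q ^ k * INR tot * F = (q ^ k * F) * INR tot by ring.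
  by apply: Rmult_le_compat_r; [lra|].
have h3 : INR cnt <= q ^ k * INR tot by apply: (Rmult_le_reg_r F).
apply: (Rmult_le_reg_r (INR tot)) => //.
by rewrite /Rdiv Rmult_assoc Rinv_l; lra.
Qed.

Lemma compl_card (r n : nat) (Pats : {set {set {set 'I_(r * 2)}}}) k
  (Q : {set {set 'I_(r * n)}} -> bool) :
  (forall M, Q M = ~~ (k <= zP Pats M)%N) ->
  (#|[set M : {set {set 'I_(r * n)}} | is_matching M && Q M]| +
   #|[set M : {set {set 'I_(r * n)}} | is_matching M && (k <= zP Pats M)%N]|)%N =
  #|[set M : {set {set 'I_(r * n)}} | is_matching M]|.
Proof.
move=> hQ.
rewrite -[RHS](cardsID [set M : {set {set 'I_(r * n)}} | Q M]).
by congr addn; apply: eq_card => M; rewrite !inE hQ ?negbK andbC.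
Qed.

Lemma Rleb_nat (z k : nat) (t : R) : t < INR k -> INR k <= t + 1 ->
  Rleb (INR z) t = ~~ (k <= z)%N.
Proof.
move=> h1 h2; rewrite /Rleb; case: (Rle_dec (INR z) t) => h.
  case: (leqP k z) => // kz.
  by have := le_INR _ _ (leP kz); lra.
case: (leqP k z) => // zk.
have := le_INR _ _ (leP zk); rewrite S_INR; lra.
Qed.

Theorem lemma3p2 (r : nat) (Pats : {set {set {set 'I_(r * 2)}}}) (C x : R) :
  (2 <= r)%N ->
  (forall P, P \in Pats -> is_matching P) ->
  Rlt 0 C -> Rle 0 x -> Rlt x (INR r) ->
  (forall k : nat, (2 <= k)%N ->
     Rle (INR (aP Pats k)) (Rmult (pow C k) (Rpower (INR k) (Rmult (INR k) x)))) ->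
  exists C'' : R, Rlt 0 C'' /\
    Un_cv (fun n : nat =>
      prob_RM (r := r) (n := n) (fun M => Rleb (INR (zP Pats M))
                          (Rmult C'' (Rpower (INR n) (Rinv (Rminus (INR r) x)))))) R1.
Proof.
move=> r2 _ C0 x0 xr ha.
have r0 : (0 < r)%N by apply: leq_trans r2.
set a := INR r - x.
have a0 : 0 < a by rewrite /a; lra.
have rR0 : 0 < INR r by apply: lt_0_INR; apply/ltP.
set D := C * INR r`! * 3 ^ r / INR r ^ r.
have D0 : 0 < D.
  rewrite /D; apply: Rmult_lt_0_compat; last by apply: Rinv_0_lt_compat; apply: pow_lt.
  apply: Rmult_lt_0_compat; last by apply: pow_lt; lra.
  apply: Rmult_lt_0_compat => //; apply: lt_0_INR; apply/ltP; exact: fact_gt0.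
exists (Rpower (2 * D) (/ a)); split; first exact: Rpower_pos.
set C'' := Rpower (2 * D) (/ a).
have C''a : Rpower C'' a = 2 * D.
  rewrite /C'' Rpower_mult Rinv_l; last lra.
  by rewrite Rpower_1 //; lra.
move=> eps eps0.
set M := Rmax 1 (/ eps).
have M1 : 1 <= M by apply: Rmax_l.
have Me : / eps <= M by apply: Rmax_r.
set B := Rpower (M / C'') a.
have B0 : 0 < B by apply: Rpower_pos.
have [N0 [hN0 hN0']] := @archimed_cor1 (/ B) (Rinv_0_lt_compat _ B0).
exists N0 => n nN0.
have N0pos : 0 < INR N0.
  exact: lt_0_INR.
have BN0 : B < INR N0.
  rewrite -(Rinv_inv B) -(Rinv_inv (INR N0)); apply: Rinv_lt_contravar => //.
  by apply: Rmult_lt_0_compat; apply: Rinv_0_lt_compat.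
have nB : B < INR n by have := le_INR _ _ nN0; lra.
have n0 : (0 < n)%N by apply/ltP; apply: INR_lt; rewrite /=; lra.
set nn := INR n.
have nn0 : 0 < nn by rewrite /nn; lra.
set t := C'' * Rpower nn (/ a).
have t_a : Rpower t a = 2 * D * nn.
  rewrite /t -Rpower_mult_distr; try apply: Rpower_pos.
  by rewrite C''a Rpower_mult Rinv_l ?Rpower_1 //; lra.
have tM : M < t.
  have C''0 : 0 < C'' by apply: Rpower_pos.
  have h : M / C'' < Rpower nn (/ a).
    have := @Rlt_Rpower_l B nn (/ a) (Rinv_0_lt_compat _ a0) (conj B0 nB).
    by rewrite /B Rpower_mult Rinv_r ?Rpower_1; [|apply: Rdiv_lt_0_compat; lra|lra].
  rewrite /t; apply: (Rmult_lt_reg_r (/ C'')); first exact: Rinv_0_lt_compat.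
  by rewrite (Rmult_comm C'') Rmult_assoc Rinv_r; lra.
have t0 : 0 < t by lra.
have [upt1 upt2] := archimed t.
have upt0 : (0 < up t)%Z by apply: lt_IZR; lra.
set k := Z.to_nat (up t).
have Kk : INR k = IZR (up t) by rewrite /k INR_IZR_INZ Z2Nat.id //; lia.
have k2 : (2 <= k)%N.
  have h1 : (1 < up t)%Z by apply: lt_IZR; lra.
  apply/leP; rewrite /k; lia.
set K := INR k.
have K0 : 0 < K by rewrite /K Kk; lra.
have hQ : forall Mx : {set {set 'I_(r * n)}},
   Rleb (INR (zP Pats Mx)) t = ~~ (k <= zP Pats Mx)%N.
  by move=> Mx; apply: Rleb_nat; rewrite Kk; lra.
have cc := compl_card hQ.
set good := #|[set M : {set {set 'I_(r * n)}} | is_matching M && Rleb (INR (zP Pats M)) t]| in cc.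
set cnt := #|[set M : {set {set 'I_(r * n)}} | is_matching M && (k <= zP Pats M)%N]| in cc.
set tot := #|[set M : {set {set 'I_(r * n)}} | is_matching M]| in cc.
have tot0 : 0 < INR tot by apply: lt_0_INR; apply/ltP; apply: tot_pos.
have kr := @key_real r Pats n k C x r0 n0 (ltnW k2) C0 (ha k k2).
rewrite -/cnt -/tot -/K -/nn in kr.
set q := C * Rpower K x * INR r`! * nn * 3 ^ r / (INR r * K) ^ r in kr.
have hq : q * Rpower K a = D * nn.
  have e1 : Rpower K a * Rpower K x = K ^ r.
    by rewrite -Rpower_plus /a -Rpower_pow //; f_equal; ring.
  rewrite /q /D Rpow_mult_distr.
  have Kr : 0 < K ^ r by apply: pow_lt.
  have rr : 0 < INR r ^ r by apply: pow_lt.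
  rewrite -e1; field; split; try lra.
  have := Rpower_pos K x; have := Rpower_pos K a; nra.
have Ka : Rpower t a < Rpower K a.
  by apply: Rlt_Rpower_l => //; split => //; rewrite /K Kk.
have q2 : q <= / 2.
  have pKa := Rpower_pos K a.
  apply: (Rmult_le_reg_r (Rpower K a)) => //.
  rewrite hq; rewrite t_a in Ka; nra.
have q0 : 0 <= q.
  rewrite /q; apply: Rmult_le_pos.
    apply: Rmult_le_pos; last by apply: pow_le; lra.
    apply: Rmult_le_pos; last lra.
    apply: Rmult_le_pos; last by apply: pos_INR.
    by have := Rpower_pos K x; nra.
  by apply: Rlt_le; apply: Rinv_0_lt_compat; apply: pow_lt; nra.
have kpow : K <= 2 ^ k.
  have := le_INR _ _ (leP (ltnW (ltn_expl k (leqnn 2)))).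
  by rewrite INRX.
have qk : q ^ k <= / K.
  apply: (Rle_trans _ ((/ 2) ^ k)); first by apply: pow_incr.
  rewrite -Rinv_pow; last lra.
  apply: Rinv_le_contravar => //.
have Kt : / K < eps.
  have : / t < eps.
    have : / t < / M by apply: Rinv_lt_contravar => //; nra.
    have : / M <= / / eps by apply: Rinv_le_contravar => //; apply: Rinv_0_lt_compat.
    rewrite Rinv_inv; lra.
  have : / K < / t by apply: Rinv_lt_contravar; [nra | rewrite /K Kk; lra].
  lra.
rewrite /R_dist /prob_RM -/good -/tot.
have eq : INR good / INR tot - 1 = - (INR cnt / INR tot).
  have := f_equal INR cc; rewrite plus_INR => h.
  rewrite -h; field; lra.
rewrite eq Rabs_Ropp Rabs_right; first lra.
apply: Rle_ge; apply: Rmult_le_pos; first by apply: pos_INR.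
by apply: Rlt_le; apply: Rinv_0_lt_compat.
Qed.
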